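(* Let $K$ be a field, $V$ a $K$-vector space of finite dimension $d>0$, and for $n\ge0$ let $B_n=S^nV$, each equipped with a separated, exhaustive, left continuous $\mathbb R$-filtration, such that $B=\bigoplus_{n\ge0}B_n$ (the symmetric algebra) is an $f$-quasi-filtered graded $K$-algebra for a function $f:\mathbb Z_{\ge0}\to\mathbb R_{\ge0}$, with integer $n_0$ as in that definition. Let $c>0$ and $g:\mathbb R\to\mathbb R$ be concave, increasing and $c$-Lipschitz, and for $n\ge1$ put $I_n=\int_{\mathbb R}g\,d(T_{1/n}\nu_{B_n})$. Then for every integer $r\ge2$ and every $(n_1,\dots,n_r)$ with all $n_i\ge\max(n_0,1)$, writing $N=n_1+\cdots+n_r$, $$N I_N\ \ge\ \sum_{i=1}^r\big(n_iI_{n_i}-c\,f(n_i)\big).$$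
   Context: Filtrations: a decreasing family $(\mathcal F_rW)_{r\in\mathbb R}$ of subspaces; separated: $\bigcap_r\mathcal F_rW=0$; exhaustive: $\bigcup_r\mathcal F_rW=W$; left continuous: $\mathcal F_rW=\bigcap_{s<r}\mathcal F_sW$. For nonzero finite-dimensional $W$ with such a filtration, $\nu_W$ is the Borel probability measure with $\nu_W([r,+\infty[)=\dim\mathcal F_rW/\dim W$ for all $r$. For $\varepsilon>0$, $T_\varepsilon\nu$ denotes the image of the measure $\nu$ under $x\mapsto\varepsilon x$. A graded $K$-algebra $B=\bigoplus_{n\ge0}B_n$ with each $B_n$ filtered by $(B_{n,s})_{s\in\mathbb R}$ is $f$-quasi-filtered if there is an integer $n_0\ge0$ such that for every $r>0$, every $(n_i)_{1\le i\le r}\in\mathbb Z_{\ge n_0}^r$ and every $(s_i)\in\mathbb R^r$, one has $B_{n_1,s_1}\cdots B_{n_r,s_r}\subseteq B_{N,S}$ where $N=\sum n_i$ and $S=\sum_i(s_i-f(n_i))$. *)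

(* Defs.v *)
From HB Require Import structures.
From mathcomp Require Import all_boot all_order all_algebra.
From Stdlib Require Import Reals ClassicalEpsilon List.

Set Implicit Arguments.
Unset Strict Implicit.
Unset Printing Implicit Defensive.

Import GRing.Theory.

(* The symmetric algebra S(V) of V = K^d, concretely: S^n V is the    *)
(* space of homogeneous polynomials of degree n in d variables,       *)
(* represented by their coefficient function on degree-n monomials.   *)

Definition mon (d n : nat) :=
  {m : {ffun 'I_d -> 'I_n.+1} | (\sum_(i < d) (m i : nat) == n)%N}.

Definition Bdeg (K : fieldType) (d n : nat) := {ffun mon d n -> K^o}.

Section Mul.
Local Open Scope ring_scope.
Definition mulB (K : fieldType) (d n m : nat) (a : Bdeg K d n) (b : Bdeg K d m)
  : Bdeg K d (n + m) :=
  [ffun t : mon d (n + m) =>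
     (\sum_(u : mon d n) \sum_(v : mon d m |
          [forall i, (val t i : nat) == addn (val u i) (val v i)])
        (GRing.mul (a u) (b v)))].

End Mul.

Definition oneB (K : fieldType) (d : nat) : Bdeg K d 0 := [ffun _ => GRing.one K^o].

Definition Hom (K : fieldType) (d : nat) := {n : nat & Bdeg K d n}.

Definition mulH (K : fieldType) (d : nat) (x y : Hom K d) : Hom K d :=
  existT _ (projT1 x + projT1 y)%N (mulB (projT2 x) (projT2 y)).

Definition prodH (K : fieldType) (d : nat) (l : list (Hom K d)) : Hom K d :=
  foldr (@mulH K d) (existT _ 0%N (oneB K d)) l.

Definition filtration (K : fieldType) (W : vectType K) := R -> {vspace W}.

Definition decreasing_filt (K : fieldType) (W : vectType K) (F : filtration W) :=
  forall r s : R, Rle r s -> (F s <= F r)%VS.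

Definition separated_filt (K : fieldType) (W : vectType K) (F : filtration W) :=
  forall v : W, (forall r : R, v \in F r) -> v = (@GRing.zero W).

Definition exhaustive_filt (K : fieldType) (W : vectType K) (F : filtration W) :=
  forall v : W, exists r : R, v \in F r.

Definition left_continuous_filt (K : fieldType) (W : vectType K) (F : filtration W) :=
  forall (r : R) (v : W), v \in F r <-> (forall s : R, Rlt s r -> v \in F s).

Definition good_filt (K : fieldType) (W : vectType K) (F : filtration W) :=
  [/\ decreasing_filt F, separated_filt F, exhaustive_filt F & left_continuous_filt F].

(* The measure nu_W, as a finite family of atoms (point, weight).      *)
(* A list L of atoms represents nu_W when its weights are >= 0 and     *)
(* nu_L([r,+oo[) = dim F_r W / dim W for every real r.  Such a Borel   *)
(* probability measure is unique, so this determines nu_W.             *)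

Definition Rsum (l : list R) : R := fold_right Rplus R0 l.

Definition mass_from (L : list (R * R)) (r : R) : R :=
  Rsum (List.map snd (List.filter (fun p => if Rle_dec r (fst p) then true else false) L)).

Definition represents_nu (K : fieldType) (W : vectType K) (F : filtration W)
    (L : list (R * R)) : Prop :=
  (forall p, List.In p L -> Rle R0 (snd p)) /\
  forall r : R,
    mass_from L r = Rdiv (INR (\dim (F r))) (INR (\dim (fullv : {vspace W}))).

Definition nu (K : fieldType) (W : vectType K) (F : filtration W) : list (R * R) :=
  epsilon (inhabits nil) (represents_nu F).

(* integral of h against the image of the atomic measure L under x |-> eps * x *)
Definition integral_scaled (h : R -> R) (eps : R) (L : list (R * R)) : R :=
  Rsum (List.map (fun p => Rmult (snd p) (h (Rmult eps (fst p)))) L).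

Definition I_n (K : fieldType) (d : nat) (F : forall n : nat, filtration (Bdeg K d n))
    (g : R -> R) (n : nat) : R :=
  integral_scaled g (Rinv (INR n)) (nu (F n)).

Definition quasi_filtered (K : fieldType) (d : nat)
    (F : forall n : nat, filtration (Bdeg K d n)) (f : nat -> R) (n0 : nat) : Prop :=
  forall (r : nat) (ns : 'I_r -> nat) (ss : 'I_r -> R)
         (x : forall i : 'I_r, Bdeg K d (ns i)),
    (0 < r)%N ->
    (forall i, (n0 <= ns i)%N) ->
    (forall i, x i \in F (ns i) (ss i)) ->
    let P := prodH [seq existT (fun n => Bdeg K d n) (ns i) (x i) | i <- enum 'I_r] in
    projT2 P \in F (projT1 P)
       (Rsum (List.map (fun i => Rminus (ss i) (f (ns i))) (enum 'I_r))).

Definition concave (g : R -> R) : Prop :=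
  forall x y t : R, Rle R0 t -> Rle t R1 ->
    Rle (Rplus (Rmult t (g x)) (Rmult (Rminus R1 t) (g y)))
        (g (Rplus (Rmult t x) (Rmult (Rminus R1 t) y))).

Definition increasingR (g : R -> R) : Prop :=
  forall x y : R, Rle x y -> Rle (g x) (g y).

Definition lipschitz (c : R) (g : R -> R) : Prop :=
  forall x y : R, Rle (Rabs (Rminus (g x) (g y))) (Rmult c (Rabs (Rminus x y))).

(* Main.v *)
Require Import Defs.
From HB Require Import structures.
From mathcomp Require Import all_boot all_order all_algebra.
From Stdlib Require Import Reals Lra Lia ClassicalEpsilon Classical.

Section Part1.
Local Open Scope R_scope.

Lemma Rsum_app l1 l2 : Rsum (List.app l1 l2) = Rsum l1 + Rsum l2.
Proof. induction l1 as [|a l IH]; simpl; [lra|rewrite IH; lra]. Qed.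

Lemma split_filter {A} (F : A -> R) (P : A -> bool) (L : list A) :
  Rsum (List.map F L) = Rsum (List.map F (List.filter P L)) +
                       Rsum (List.map F (List.filter (fun p => negb (P p)) L)).
Proof.
induction L as [|a l IH]; simpl; [lra|].
destruct (P a); simpl; rewrite IH; lra.
Qed.

Lemma filter_comm {A} (P Q : A -> bool) (L : list A) :
  List.filter P (List.filter Q L) = List.filter Q (List.filter P L).
Proof.
induction L as [|a l IH]; simpl; [done|].
destruct (P a) eqn:HP; destruct (Q a) eqn:HQ; simpl; rewrite ?HP ?HQ IH; done.
Qed.

Lemma filter_all_true {A} (P : A -> bool) (L : list A) :
  (forall p, List.In p L -> P p = true) -> List.filter P L = L.
Proof.
induction L as [|a l IH]; simpl; [done|] => H.
rewrite H; [|by left]; rewrite IH //; move=> p Hp; apply: H; by right.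
Qed.

Lemma filter_all_false {A} (P : A -> bool) (L : list A) :
  (forall p, List.In p L -> P p = false) -> List.filter P L = nil.
Proof.
induction L as [|a l IH]; simpl; [done|] => H.
rewrite H; [|by left]; rewrite IH //; move=> p Hp; apply: H; by right.
Qed.

Definition leb_r (r : R) (p : R * R) : bool := if Rle_dec r (fst p) then true else false.
Definition neqM (M : R) (p : R * R) : bool := if Req_EM_T (fst p) M then false else true.

Definition intk (k : R -> R) (L : list (R * R)) : R :=
  Rsum (List.map (fun p => snd p * k (fst p)) L).

Definition fmax (L : list (R * R)) (m0 : R) : R :=
  List.fold_right (fun p m => Rmax (fst p) m) m0 L.

Lemma fmax_ge L m0 : m0 <= fmax L m0 /\ forall p, List.In p L -> fst p <= fmax L m0.
Proof.
induction L as [|a l [IH1 IH2]]; simpl; split.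
- lra.
- done.
- eapply Rle_trans; [exact IH1| apply Rmax_r].
- move=> p [->|Hp]; [apply Rmax_l|]. eapply Rle_trans; [apply IH2; exact Hp| apply Rmax_r].
Qed.

Lemma fmax_in L m0 : fmax L m0 = m0 \/ exists p, List.In p L /\ fst p = fmax L m0.
Proof.
induction L as [|a l IH]; simpl; [by left|].
apply Rmax_case.
- right; exists a; split; [by left|done].
- destruct IH as [IH|[p [Hp Hq]]]; [by left| right; exists p; split; [by right|done]].
Qed.

Lemma intk_const k M l : (forall p, List.In p l -> fst p = M) ->
  intk k l = Rsum (List.map snd l) * k M.
Proof.
unfold intk; induction l as [|a l IH]; simpl => H; [lra|].
rewrite (H a (or_introl erefl)) IH; [lra|]. move=> p Hp; apply H; by right.
Qed.

Lemma decomp_mass L M r : (forall p, List.In p L -> fst p <= M) ->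
  mass_from L r = mass_from (List.filter (neqM M) L) r +
     (if Rle_dec r M then Rsum (List.map snd (List.filter (fun p => negb (neqM M p)) L)) else 0).
Proof.
move=> HL; unfold mass_from.
rewrite (split_filter snd (neqM M) (List.filter _ L)).
rewrite (filter_comm (neqM M)).
rewrite (filter_comm (fun p => negb (neqM M p))).
f_equal.
have Hall : forall p, List.In p (List.filter (fun p => negb (neqM M p)) L) -> fst p = M.
{ move=> p /List.filter_In [_ Hp]; move: Hp; unfold neqM; destruct (Req_EM_T (fst p) M); done. }
destruct (Rle_dec r M) as [Hr|Hr].
- rewrite filter_all_true //. move=> p /Hall Hp; unfold leb_r. rewrite Hp. by destruct (Rle_dec r M).
- rewrite filter_all_false //. move=> p /Hall Hp. rewrite Hp. by destruct (Rle_dec r M).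
Qed.

Lemma intk_decomp k L M : intk k L = intk k (List.filter (neqM M) L) +
   Rsum (List.map snd (List.filter (fun p => negb (neqM M p)) L)) * k M.
Proof.
unfold intk at 1; rewrite (split_filter _ (neqM M)). f_equal.
apply intk_const. move=> p /List.filter_In [_ Hp]; move: Hp; unfold neqM; destruct (Req_EM_T (fst p) M); done.
Qed.

Lemma filter_length {A} (P : A -> bool) (L : list A) : (length (List.filter P L) <= length L)%coq_nat.
Proof. induction L as [|a l IH]; simpl; [lia|destruct (P a); simpl; lia]. Qed.

Lemma filter_length_lt {A} (P : A -> bool) (L : list A) p : List.In p L -> P p = false ->
  (length (List.filter P L) < length L)%coq_nat.
Proof.
induction L as [|a l IH]; simpl; [done|].
move=> [->|Hp] HP.
- rewrite HP. have := filter_length P l. lia.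
- destruct (P a); simpl; have := IH Hp HP; lia.
Qed.

Lemma intk_unique_aux n : forall L L', (Nat.add (length L) (length L') <= n)%coq_nat ->
  (forall r, mass_from L r = mass_from L' r) -> forall k, intk k L = intk k L'.
Proof.
elim: n => [|n IH] L L' Hn Hm k.
- destruct L, L'; simpl in Hn; try lia. done.
- destruct (List.app L L') as [|p0 l0] eqn:Hcat.
  + destruct L, L'; try discriminate. done.
  + set M := fmax (List.app L L') (fst p0).
    have [HM1 HM2] := fmax_ge (List.app L L') (fst p0).
    have HL : forall p, List.In p L -> fst p <= M.
    { move=> p Hp; apply HM2; apply List.in_or_app; by left. }
    have HL' : forall p, List.In p L' -> fst p <= M.
    { move=> p Hp; apply HM2; apply List.in_or_app; by right. }
    have Hw : forall L0, (forall p, List.In p L0 -> fst p <= M) ->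
       mass_from L0 M = Rsum (List.map snd (List.filter (fun p => negb (neqM M p)) L0)).
    { move=> L0 H0. rewrite (decomp_mass L0 M M H0).
      case: Rle_dec => [Hmm|Hc]; last by lra.
      have -> : mass_from (List.filter (neqM M) L0) M = 0; [|simpl; lra].

      unfold mass_from. rewrite filter_all_false //.
      move=> p /List.filter_In [Hp Hq]. unfold leb_r. move: Hq; unfold neqM.
      destruct (Req_EM_T (fst p) M) as [|Hne]; [done|]. move=> _.
      have := H0 p Hp. destruct (Rle_dec M (fst p)); [|done]. lra. }
    have HwE := Hm M. rewrite (Hw L HL) (Hw L' HL') in HwE.
    rewrite (intk_decomp k L M) (intk_decomp k L' M) HwE. f_equal.
    apply IH.
    * have Hin : exists p, (List.In p L \/ List.In p L') /\ fst p = M.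
      { have [E|[p [Hp Hq]]] := fmax_in (List.app L L') (fst p0).
        - exists p0. split; [|done]. apply List.in_app_or. rewrite Hcat. by left.
        - exists p. split; [|done]. by apply List.in_app_or. }
      destruct Hin as [p [[Hp|Hp] Hq]].
      -- have Hnf : neqM M p = false by rewrite /neqM Hq; case: Req_EM_T.
         have := filter_length_lt (neqM M) L p Hp Hnf.
         have := filter_length (neqM M) L'. lia.
      -- have Hnf : neqM M p = false by rewrite /neqM Hq; case: Req_EM_T.
         have := filter_length_lt (neqM M) L' p Hp Hnf.
         have := filter_length (neqM M) L. lia.
    * move=> r. have := Hm r. rewrite (decomp_mass L M r HL) (decomp_mass L' M r HL') HwE. lra.
Qed.

Lemma intk_unique L L' : (forall r, mass_from L r = mass_from L' r) ->
  forall k, intk k L = intk k L'.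
Proof. move=> H k. exact: (intk_unique_aux (Nat.add (length L) (length L')) L L' (le_n _) H k). Qed.

End Part1.

Set Implicit Arguments.
Unset Strict Implicit.
Unset Printing Implicit Defensive.
Import GRing.Theory.

Lemma nat_least (P : nat -> Prop) : (exists n, P n) -> exists m, P m /\ forall k, P k -> (m <= k)%nat.
Proof.
move=> [n Hn].
apply: NNPP => Hno.
have H : forall k j, (j <= k)%nat -> ~ P j.
{ elim=> [|k IH] j Hj HPj.
  - move: Hj; rewrite leqn0 => /eqP Hj0; subst j. apply: Hno. exists 0%nat; split=> // k _.
  - apply: Hno; exists j; split=> // i Hi. rewrite leqNgt; apply/negP=> Hij.
    apply: (IH i) => //. by rewrite -ltnS (leq_trans Hij Hj). }
exact: (H n n (leqnn n) Hn).
Qed.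

Section Filt.
Variables (K : fieldType) (W : vectType K) (F : filtration W).
Hypothesis HF : good_filt F.

Lemma filt_decr r s : Rle r s -> (F s <= F r)%VS.
Proof. by case: HF => H _ _ _; apply: H. Qed.

Lemma filt_zero : exists t0, F t0 = 0%VS.
Proof.
case: HF => Hdec Hsep Hexh Hlc.
have Hex : exists m, exists t, \dim (F t) = m by exists (\dim (F R0)), R0.
have [m [[t0 Ht0] Hmin]] := nat_least Hex.
exists t0.
have Heq : forall t, Rle t0 t -> F t = F t0.
{ move=> t Ht. apply/eqP; rewrite eqEdim Hdec //= Ht0. apply: Hmin. by exists t. }
apply/eqP; rewrite -subv0; apply/subvP => v Hv. rewrite memv0; apply/eqP; apply: Hsep => t.
destruct (Rle_dec t0 t) as [H|H].
- by rewrite Heq.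
- by apply: (subvP (Hdec t t0 _)) => //; lra.
Qed.

Lemma filt_stab (lam : R) : exists s1, Rlt s1 lam /\ (F s1 <= F lam)%VS.
Proof.
case: HF => Hdec Hsep Hexh Hlc.
have Hex : exists m, exists t, Rlt t lam /\ \dim (F t) = m.
{ exists (\dim (F (Rminus lam R1))), (Rminus lam R1); split=> //; lra. }
have [m [[s1 [Hs1 Ht0]] Hmin]] := nat_least Hex.
exists s1; split=> //.
apply/subvP => v Hv. apply/Hlc => s Hs.
destruct (Rle_dec s s1) as [H|H].
- by apply: (subvP (Hdec _ _ H)).
- have -> : F s = F s1; last done.
  apply/eqP; rewrite eqEdim Hdec /=; last lra.
  rewrite Ht0; apply: Hmin. by exists s.
Qed.

Variable P : {vspace W} -> Prop.
Hypothesis Pmono : forall U V, P U -> (U <= V)%VS -> P V.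
Hypothesis Pnot0 : ~ P 0%VS.
Hypothesis Pex : exists t, P (F t).

Lemma filt_sup : exists lam, forall t, P (F t) <-> Rle t lam.
Proof.
have [t0 Ht0] := filt_zero.
have Hb : bound (fun t => P (F t)).
{ exists t0 => t Ht. destruct (Rle_dec t t0) as [H|H]; first done.
  exfalso; apply: Pnot0. apply: (Pmono Ht). rewrite -Ht0; apply: filt_decr; lra. }
have [lam [Hub Hlub]] := completeness _ Hb Pex.
exists lam => t; split; first by apply: Hub.
move=> Htl.
suff Hl : P (F lam) by apply: (Pmono Hl); apply: filt_decr.
have [s1 [Hs1 Hsub]] := filt_stab lam.
have [u [Hu Hsu]] : exists u, P (F u) /\ Rlt s1 u.
{ apply: NNPP => Hn. have : Rle lam s1; last lra.
  apply: Hlub => u Hu. destruct (Rle_dec u s1) as [H|H]; first done.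
  exfalso; apply: Hn; exists u; split=> //; lra. }
apply: (Pmono Hu). apply: subv_trans Hsub. apply: filt_decr; lra.
Qed.
End Filt.

Set Implicit Arguments.
Unset Strict Implicit.
Unset Printing Implicit Defensive.
Import GRing.Theory.
Open Scope ring_scope.

Lemma key_inj_gen (B : nat) : forall d (u v : 'I_d -> nat),
  (forall i, u i < B)%nat -> (forall i, v i < B)%nat ->
  (\sum_(i < d) u i * expn B i = \sum_(i < d) v i * expn B i)%nat -> forall i, u i = v i.
Proof.
elim=> [|d IH] u v Hu Hv.
- by move=> _ [].
- rewrite !big_ord_recl /= !expn0 !muln1.
  have HB : (0 < B)%nat by apply: leq_ltn_trans (Hu ord0); rewrite leq0n.
  have E : forall (w : 'I_d.+1 -> nat), (\sum_(i < d) w (lift ord0 i) * expn B (bump 0 i) =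
             (\sum_(i < d) w (lift ord0 i) * expn B i) * B)%nat.
  { move=> w. rewrite big_distrl /=. apply: eq_bigr => i _. by rewrite /bump leq0n add1n expnS mulnCA mulnC. }
  rewrite !E => Heq.
  have H0 : u ord0 = v ord0.
  { have := congr1 (fun x => x %% B)%nat Heq. rewrite /= !(addnC (u ord0)) !(addnC (v ord0)).
    by rewrite !modnMDl !modn_small. }
  have H1 : (\sum_(i < d) u (lift ord0 i) * expn B i = \sum_(i < d) v (lift ord0 i) * expn B i)%nat.
  { move: Heq; rewrite H0 => /eqP; rewrite eqn_add2l => /eqP Heq.
    by apply/eqP; rewrite -(eqn_pmul2r HB) Heq. }
  move=> i; case: (unliftP ord0 i) => [j ->|->] //.
  by apply: (IH (fun j => u (lift ord0 j)) (fun j => v (lift ord0 j))).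
Qed.

Section Mon.
Variables (K : fieldType) (d B : nat).

Lemma ffapp (f g : {ffun 'I_d -> nat}) i : f = g -> f i = g i.
Proof. by move->. Qed.

Definition vecm n (a : mon d n) : {ffun 'I_d -> nat} := [ffun i => nat_of_ord (val a i)].

Lemma vecm_sum n (a : mon d n) : (\sum_i vecm a i)%nat = n.
Proof. apply: etrans (eqP (valP a)). apply: eq_bigr => i _; by rewrite ffunE. Qed.

Lemma vecm_le n (a : mon d n) i : (vecm a i <= n)%nat.
Proof. rewrite -{2}(vecm_sum a) (bigD1 i) //=. exact: leq_addr. Qed.

Lemma vecm_inj n : injective (@vecm n).
Proof.
move=> a b H. apply: val_inj; apply/ffunP => i; apply: val_inj.
by have := ffapp i H; rewrite /= !ffunE.
Qed.

Lemma mon_of_vec n (v : {ffun 'I_d -> nat}) : (\sum_i v i)%nat = n -> exists a : mon d n, vecm a = v.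
Proof.
move=> Hs.
have Hle : forall i, (v i < n.+1)%nat.
{ move=> i; rewrite ltnS -Hs (bigD1 i) //=. exact: leq_addr. }
have Hp : (\sum_(i < d) (([ffun i => Ordinal (Hle i)] : {ffun 'I_d -> 'I_n.+1}) i : nat) == n)%nat.
{ apply/eqP; apply: etrans Hs; apply: eq_bigr => i _; by rewrite ffunE. }
exists (@exist _ (fun m : {ffun 'I_d -> 'I_n.+1} => (\sum_(i < d) (m i : nat) == n)%nat) _ Hp). apply/ffunP => i; by rewrite !ffunE.
Qed.

Definition key (v : {ffun 'I_d -> nat}) : nat := (\sum_(i < d) v i * expn B i)%nat.
Definition vadd (u v : {ffun 'I_d -> nat}) : {ffun 'I_d -> nat} := [ffun i => (u i + v i)%nat].
Definition vzero : {ffun 'I_d -> nat} := [ffun _ => 0%nat].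

Lemma key_vadd u v : key (vadd u v) = (key u + key v)%nat.
Proof. rewrite /key -big_split /=; apply: eq_bigr => i _; by rewrite ffunE mulnDl. Qed.

Lemma key_inj n (a b : mon d n) : (n < B)%nat -> key (vecm a) = key (vecm b) -> a = b.
Proof.
move=> HnB Hk. apply: vecm_inj; apply/ffunP => i.
apply: (@key_inj_gen B d (vecm a) (vecm b)) => [j|j|]; [exact: leq_ltn_trans (vecm_le _ _) HnB|exact: leq_ltn_trans (vecm_le _ _) HnB|exact Hk].
Qed.

Definition hasLead n (x : Bdeg K d n) (v : {ffun 'I_d -> nat}) : Prop :=
  exists a : mon d n, [/\ vecm a = v, x a != 0 &
     forall t : mon d n, (key (vecm a) < key (vecm t))%nat -> x t = 0].

Lemma mulBE n m (a : Bdeg K d n) (b : Bdeg K d m) t :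
  mulB a b t = \sum_(u : mon d n) \sum_(v : mon d m | vecm t == vadd (vecm u) (vecm v)) a u * b v.
Proof.
rewrite /mulB ffunE. apply: eq_bigr => u _. apply: eq_bigl => v.
apply/forallP/eqP => [H|H].
- apply/ffunP => i; rewrite !ffunE. exact/eqP/H.
- move=> i; have := ffapp i H; rewrite /= !ffunE => ->. done.
Qed.

Lemma lead_mulB n m (a : Bdeg K d n) (b : Bdeg K d m) u0 v0 : (n + m < B)%nat ->
  hasLead a u0 -> hasLead b v0 -> hasLead (mulB a b) (vadd u0 v0).
Proof.
move=> HB [al [Hal Ha Hza]] [be [Hbe Hb Hzb]].
have HnB : (n < B)%nat by apply: leq_ltn_trans HB; apply: leq_addr.
have Hbound : forall u v, a u * b v != 0 ->
   (key (vecm u) <= key (vecm al))%nat /\ (key (vecm v) <= key (vecm be))%nat.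
{ move=> u v; rewrite mulf_eq0 negb_or => /andP [Hu Hv].
  split; rewrite leqNgt; apply/negP => Hlt; [move: Hu | move: Hv]; by rewrite ?Hza ?Hzb ?eqxx. }
have [tau Htau] : exists tau : mon d (n + m), vecm tau = vadd u0 v0.
{ apply: mon_of_vec. rewrite -Hal -Hbe.
  under eq_bigr => i _ do rewrite ffunE. by rewrite big_split /= !vecm_sum. }
exists tau; split => //.
- rewrite mulBE (bigD1 al) //= (bigD1 be) /=; last by rewrite Htau Hal Hbe.
  have E1 : \sum_(i | (vecm tau == vadd (vecm al) (vecm i)) && (i != be)) a al * b i = 0.
  { apply: big1 => v /andP [Hc Hne]. exfalso; move: Hne; apply/negP/negPn/eqP.
    apply: vecm_inj; apply/ffunP => i. have := ffapp i (eqP Hc).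
    rewrite Htau -Hal -Hbe /= !ffunE. by move/eqP; rewrite eqn_add2l => /eqP. }
  have E2 : \sum_(i | i != al) \sum_(v | vecm tau == vadd (vecm i) (vecm v)) a i * b v = 0.
  { apply: big1 => u Hne. apply: big1 => v Hc. apply/eqP/negPn/negP => H.
    have [H1 H2] := Hbound _ _ H.
    have Hk : (key (vecm u) + key (vecm v) = key (vecm al) + key (vecm be))%nat.
    { by rewrite -!key_vadd -(eqP Hc) Htau Hal Hbe. }
    have Hku : key (vecm u) = key (vecm al).
    { apply/eqP; rewrite eqn_leq H1 /=. rewrite -(leq_add2r (key (vecm v))) Hk. by apply: leq_add. }
    by move: Hne; rewrite (key_inj HnB Hku) eqxx. }
  by rewrite E1 E2 !addr0 mulf_neq0.
- move=> t Ht. rewrite mulBE. apply: big1 => u _; apply: big1 => v Hc.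
  apply/eqP/negPn/negP => H. have [H1 H2] := Hbound _ _ H.
  move: Ht; rewrite (eqP Hc) key_vadd Htau key_vadd -Hal -Hbe ltnNge.
  by rewrite (leq_add H1 H2).
Qed.

Lemma lead_oneB : hasLead (oneB K d) vzero.
Proof.
have [a Ha] : exists a : mon d 0, vecm a = vzero.
{ apply: mon_of_vec. by rewrite big1 // => i _; rewrite ffunE. }
exists a; split => //.
- by rewrite ffunE oner_eq0.
- move=> t. have -> : vecm t = vecm a.
  { apply/ffunP => i; have := vecm_le t i; rewrite leqn0 => /eqP ->. by rewrite Ha /vzero ffunE. }
  by rewrite ltnn.
Qed.

End Mon.

Section Prod.
Variables (K : fieldType) (d B : nat).

Lemma lead_prodH (I : Type) (idx : seq I) (ns : I -> nat)
  (x : forall i, Bdeg K d (ns i)) (L : I -> {ffun 'I_d -> nat}) :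
  (\sum_(i <- idx) ns i < B)%nat -> (forall i, hasLead B (x i) (L i)) ->
  let P := prodH [seq existT (fun n => Bdeg K d n) (ns i) (x i) | i <- idx] in
  projT1 P = (\sum_(i <- idx) ns i)%nat /\
  hasLead B (projT2 P) (foldr (fun i acc => vadd (L i) acc) (vzero d) idx).
Proof.
elim: idx => [|i l IH] HB HL /=.
- rewrite big_nil; split => //. exact: lead_oneB.
- rewrite big_cons in HB.
  have HB' : (\sum_(j <- l) ns j < B)%nat by apply: leq_ltn_trans HB; apply: leq_addl.
  have [E1 E2] := IH HB' HL.
  split; first by rewrite big_cons -E1.
  apply: lead_mulB => //. by rewrite E1.
Qed.
End Prod.

Close Scope ring_scope.

Set Implicit Arguments.
Unset Strict Implicit.
Unset Printing Implicit Defensive.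
Import GRing.Theory.
Open Scope ring_scope.

Definition pb (P : Prop) : bool := if excluded_middle_informative P then true else false.
Lemma pbP (P : Prop) : reflect P (pb P).
Proof. rewrite /pb; case: excluded_middle_informative => H; by constructor. Qed.

Section Dim.
Variables (K : fieldType) (d B n : nat).
Hypothesis HnB : (n < B)%nat.

Definition proj (A : pred (mon d n)) (x : Bdeg K d n) : Bdeg K d n :=
  [ffun t => if A t then x t else 0].

Lemma proj_linear A : linear_for *:%R (proj A).
Proof.
move=> a u v; apply/ffunP => t; rewrite !ffunE.
case: (A t); by rewrite ?ffunE ?scaler0 ?addr0.
Qed.

HB.instance Definition _ A := GRing.isLinear.Build K (Bdeg K d n) (Bdeg K d n) *:%R (proj A) (proj_linear A).

Lemma scaleKo (a b : K^o) : a *: b = a * b. Proof. by []. Qed.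

Definition ebas (t : mon d n) : Bdeg K d n := [ffun s => if s == t then 1 else 0].

Lemma lead_exists (x : Bdeg K d n) : x != 0 -> exists a : mon d n, hasLead B x (vecm a).
Proof.
move=> Hx.
have [t0 Ht0] : exists t0, x t0 != 0.
{ apply: NNPP => H. move: Hx; apply/negP/negPn/eqP/ffunP => t.
  rewrite ffunE. apply/eqP; apply: NNPP => Hn. apply: H; exists t. exact/negP. }
case: (@arg_maxnP _ t0 (fun t => x t != 0) (fun t => key B (vecm t)) Ht0) => a Ha Hmax.
exists a; exists a; split => // t Hlt. apply/eqP; apply: NNPP => /negP Ht.
have H2 : (key B (vecm t) <= key B (vecm a))%nat := Hmax t Ht. by move: Hlt; rewrite ltnNge H2.
Qed.

Variable U : {vspace Bdeg K d n}.

Definition LMp (a : mon d n) : Prop := exists x, x \in U /\ hasLead B x (vecm a).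
Definition LMb : pred (mon d n) := fun a => pb (LMp a).

Lemma dim_le : (\dim U <= #|LMb|)%nat.
Proof.
pose f := linfun (proj LMb).
have Hker : (U :&: lker f = 0)%VS.
{ apply/eqP; rewrite -subv0; apply/subvP => x /memv_capP [Hx Hk]. rewrite memv0.
  apply/negPn/negP => Hx0.
  have [a Ha] := lead_exists Hx0.
  have HA : LMb a by apply/pbP; exists x.
  move: Hk; rewrite memv_ker lfunE /= => /eqP Hk.
  have := congr1 (fun g : Bdeg K d n => g a) Hk. rewrite /= !ffunE HA => Hxa.
  case: Ha => be [Hbe Hnz _]. move: Hnz. by rewrite (vecm_inj Hbe) Hxa eqxx. }
rewrite -(limg_dim_eq Hker).
have Hsub : (f @: U <= <<[seq ebas t | t <- enum LMb]>>)%VS.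
{ apply/subvP => y /memv_imgP [x Hx ->]. rewrite lfunE /=.
  have -> : proj LMb x = \sum_(t <- enum LMb) x t *: ebas t.
  { apply/ffunP => s. rewrite sum_ffunE ffunE.
    under eq_bigr => t _ do rewrite !ffunE scaleKo.
    case Hs: (LMb s).
    - rewrite (bigD1_seq s) /=; [| by rewrite mem_enum | exact: enum_uniq].
      rewrite eqxx mulr1 big1 ?addr0 // => t Ht. by rewrite eq_sym (negbTE Ht) mulr0.
    - rewrite big1_seq // => t /andP [_ Ht]. rewrite mem_enum in Ht.
      case: eqP => [E|_]; last by rewrite mulr0. have Ht' : LMb t := Ht. by move: Hs; rewrite E Ht'. }
  rewrite big_seq; apply: memv_suml => t Ht. apply: memvZ. apply: memv_span. exact: map_f. }
apply: leq_trans (dimvS Hsub) _. apply: leq_trans (dim_span _) _. by rewrite size_map -cardE.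
Qed.

Definition xsel (a : mon d n) : Bdeg K d n :=
  epsilon (inhabits 0) (fun x => x \in U /\ hasLead B x (vecm a)).

Lemma xselP a : LMb a -> xsel a \in U /\ hasLead B (xsel a) (vecm a).
Proof. move/pbP => [x Hx]. exact: (epsilon_spec (inhabits (0 : Bdeg K d n)) (fun x => x \in U /\ hasLead B x (vecm a)) (ex_intro _ x Hx)). Qed.

Lemma lead_at (x : Bdeg K d n) (a : mon d n) : hasLead B x (vecm a) ->
  x a != 0 /\ forall t : mon d n, (key B (vecm a) < key B (vecm t))%nat -> x t = 0.
Proof. by case=> be [/vecm_inj -> H1 H2]. Qed.

Lemma dim_ge : (#|LMb| <= \dim U)%nat.
Proof.
pose X := [tuple xsel (enum_val i) | i < #|LMb|].
have HXi : forall i : 'I_#|LMb|, X`_i = xsel (enum_val i).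
{ move=> i. by rewrite -tnth_nth tnth_mktuple. }
have Hfree : free X.
{ apply/freeP => k Hk i. apply/eqP; apply: contraT => Hki.
  case: (@arg_maxnP _ i (fun j => k j != 0) (fun j => key B (vecm (enum_val j))) Hki) => j Hj Hmax.
  set al := enum_val j.
  have := congr1 (fun g : Bdeg K d n => g al) Hk. rewrite /= sum_ffunE ffunE.
  rewrite (bigD1 j) //= big1 ?addr0.
  + have [Hnz _] := lead_at (proj2 (xselP (enum_valP j))).
    rewrite HXi ffunE scaleKo => /eqP. by rewrite mulf_eq0 (negbTE Hj) (negbTE Hnz).
  + move=> j' Hj'. rewrite HXi ffunE scaleKo.
    case Hk': (k j' == 0); first by rewrite (eqP Hk') mul0r.
    have Hle : (key B (vecm (enum_val j')) <= key B (vecm al))%nat := Hmax j' (negbT Hk').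
    have Hne : key B (vecm (enum_val j')) != key B (vecm al).
    { apply/negP => /eqP /(key_inj HnB) /enum_val_inj E. by move: Hj'; rewrite E eqxx. }
    have [_ Hz] := lead_at (proj2 (xselP (enum_valP j'))).
    by rewrite Hz ?mulr0 // ltn_neqAle Hne Hle. }
have HsX : (<<X>> <= U)%VS.
{ apply/span_subvP => y /mapP [i _ ->]. exact: (proj1 (xselP (enum_valP i))). }
apply: leq_trans (dimvS HsX). by move: Hfree; rewrite /free size_tuple => /eqP ->.
Qed.

Lemma dim_LM : \dim U = #|LMb|.
Proof. apply/eqP; by rewrite eqn_leq dim_le dim_ge. Qed.

End Dim.

Close Scope ring_scope.

Set Implicit Arguments.
Unset Strict Implicit.
Unset Printing Implicit Defensive.
Import GRing.Theory.

Section Nu.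
Variables (K : fieldType) (d B n : nat).
Hypothesis HnB : (n < B)%nat.
Variable F : filtration (Bdeg K d n).
Hypothesis HF : good_filt F.

Lemma ebas_lead (a : mon d n) : hasLead B (ebas K a) (vecm a).
Proof.
exists a; split => //.
- by rewrite ffunE eqxx oner_eq0.
- move=> t Ht. rewrite ffunE. case: eqP => // E. by move: Ht; rewrite E ltnn.
Qed.

Lemma LMp_mono (a : mon d n) (U V : {vspace Bdeg K d n}) :
  LMp B U a -> (U <= V)%VS -> LMp B V a.
Proof. move=> [x [Hx Hl]] HUV. exists x; split => //. exact: (subvP HUV). Qed.

Lemma LMp_not0 (a : mon d n) : ~ LMp B (0%VS : {vspace Bdeg K d n}) a.
Proof.
move=> [x [Hx Hl]]. move: Hx; rewrite memv0 => /eqP Hx0.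
have [Hnz _] := lead_at Hl. by move: Hnz; rewrite Hx0 ffunE eqxx.
Qed.

Lemma LMp_ex (a : mon d n) : exists t, LMp B (F t) a.
Proof.
case: HF => _ _ Hex _. have [t Ht] := Hex (ebas K a).
exists t, (ebas K a); split => //. exact: ebas_lead.
Qed.

Definition lam (a : mon d n) : R :=
  epsilon (inhabits R0) (fun l => forall t, LMp B (F t) a <-> Rle t l).

Lemma lamP (a : mon d n) t : LMp B (F t) a <-> Rle t (lam a).
Proof.
have H := filt_sup HF (@LMp_mono a) (@LMp_not0 a) (LMp_ex a).
exact: (epsilon_spec (inhabits R0) (fun l => forall t, LMp B (F t) a <-> Rle t l) H).
Qed.

Lemma lam_attained (a : mon d n) : exists x, x \in F (lam a) /\ hasLead B x (vecm a).
Proof. by apply/lamP; apply: Rle_refl. Qed.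

Lemma lam_ge (a : mon d n) t x : x \in F t -> hasLead B x (vecm a) -> Rle t (lam a).
Proof. move=> Hx Hl. apply/lamP. by exists x. Qed.

Lemma dimF t : \dim (F t) = #|[pred a : mon d n | pb (Rle t (lam a))]|.
Proof.
rewrite (dim_LM HnB). apply: eq_card => a. rewrite !inE /LMb.
apply/pbP/pbP; by move/lamP.
Qed.

Lemma dim_full : \dim (fullv : {vspace Bdeg K d n}) = #|{: mon d n}|.
Proof.
rewrite (dim_LM HnB). apply: eq_card => a. rewrite !inE /LMb.
apply/pbP. exists (ebas K a); split; [exact: memvf|exact: ebas_lead].
Qed.

End Nu.

Lemma INR_pos_card (T : finType) (x : T) : (0 < INR #|{: T}|)%R.
Proof. apply: lt_0_INR. apply/ltP. apply/card_gt0P. by exists x. Qed.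

Section Rep.
Local Open Scope R_scope.

Lemma mass_map (T : Type) (h : T -> R) (w : R) (s : seq T) r :
  mass_from (List.map (fun a => (h a, w)) s) r =
  INR (count (fun a => pb (Rle r (h a))) s) * w.
Proof.
elim: s => [|x s IH]; first (rewrite /mass_from /=; lra).
have -> : mass_from (List.map (fun a => (h a, w)) (x :: s)) r =
   (if Rle_dec r (h x) then w else 0) + mass_from (List.map (fun a => (h a, w)) s) r.
{ rewrite /mass_from /=. case: Rle_dec => _ /=; lra. }
rewrite IH. have -> : count (fun a => pb (Rle r (h a))) (x :: s) =
   addn (nat_of_bool (pb (Rle r (h x)))) (count (fun a => pb (Rle r (h a))) s) by [].
rewrite plus_INR /pb. case: excluded_middle_informative => H; case: Rle_dec => H' /=;
  try contradiction; lra.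
Qed.

Lemma count_card (T : finType) (P : pred T) : count P (enum T) = #|P|.
Proof. first [by rewrite -sum1_count -sum1_card big_enum_cond | by rewrite -sum1_count -sum1_card -big_enum | by rewrite -sum1_count -sum1_card big_mkcond /= [RHS]big_mkcond /= -big_enum | by rewrite cardE -size_filter]. Qed.

Variables (K : fieldType) (d B n : nat).
Hypothesis HnB : (n < B)%nat.
Hypothesis Hd : (0 < d)%nat.
Variable F : filtration (Bdeg K d n).
Hypothesis HF : good_filt F.

Definition Lnu : list (R * R) :=
  List.map (fun a => (lam B F a, / INR #|{: mon d n}|)) (enum {: mon d n}).

Lemma mon_inhab : exists a : mon d n, True.
Proof.
pose v : {ffun 'I_d -> nat} := [ffun i => if i == Ordinal Hd then n else 0%nat].
have Hs : (\sum_i v i)%nat = n.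
{ rewrite (bigD1 (Ordinal Hd)) //= big1 ?addn0; first by rewrite ffunE eqxx.
  move=> i /negbTE Hi; by rewrite ffunE Hi. }
have [a _] := mon_of_vec Hs. by exists a.
Qed.

Lemma Lnu_rep : represents_nu F Lnu.
Proof.
have [a0 _] := mon_inhab.
have Hpos := INR_pos_card a0.
split.
- move=> p /List.in_map_iff [a [<- _]] /=. left. by apply: Rinv_0_lt_compat.
- move=> r. rewrite mass_map count_card (@dim_full K d B n HnB) -(@dimF K d B n HnB F HF r).
  rewrite /Rdiv. done.
Qed.

Lemma I_formula (g : R -> R) :
  integral_scaled g (/ INR n) (nu F) =
  Rsum (List.map (fun a => / INR #|{: mon d n}| * g (/ INR n * lam B F a)) (enum {: mon d n})).
Proof.
have Hrep : represents_nu F (nu F).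
{ exact: (epsilon_spec (inhabits nil) (represents_nu F) (ex_intro _ _ Lnu_rep)). }
have E : forall r, mass_from (nu F) r = mass_from Lnu r.
{ move=> r. case: Hrep => _ ->. case: Lnu_rep => _ ->. done. }
have := intk_unique _ _ E (fun x => g (/ INR n * x)).
rewrite /intk /integral_scaled => ->. rewrite /Lnu. by rewrite List.map_map.
Qed.

End Rep.

Set Implicit Arguments.
Unset Strict Implicit.
Unset Printing Implicit Defensive.

Lemma Rplus_assoc' : associative Rplus. Proof. move=> x y z; by rewrite Rplus_assoc. Qed.
HB.instance Definition _ := Monoid.isComLaw.Build R R0 Rplus Rplus_assoc' Rplus_comm Rplus_0_l.

Lemma Rsum_distr (I : Type) (r : seq I) (P : pred I) (F : I -> R) c :
  Rmult c (\big[Rplus/R0]_(i <- r | P i) F i) = \big[Rplus/R0]_(i <- r | P i) Rmult c (F i).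
Proof.
elim: r => [|x r IH]; rewrite ?big_nil ?big_cons; first by rewrite Rmult_0_r.
case: (P x); rewrite -IH //. by rewrite Rmult_plus_distr_l.
Qed.

Lemma Rsum_const (I : Type) (r : seq I) (P : pred I) c :
  \big[Rplus/R0]_(i <- r | P i) c = Rmult (INR (count P r)) c.
Proof.
elim: r => [|x r IH]; rewrite ?big_nil ?big_cons /=; first by rewrite Rmult_0_l.
case: (P x); rewrite IH ?add1n ?add0n ?S_INR; ring.
Qed.

Lemma Rsum_le (I : Type) (r : seq I) (P : pred I) (F G : I -> R) :
  (forall i, P i -> Rle (F i) (G i)) ->
  Rle (\big[Rplus/R0]_(i <- r | P i) F i) (\big[Rplus/R0]_(i <- r | P i) G i).
Proof.
move=> H; elim: r => [|x r IH]; rewrite ?big_nil ?big_cons; first exact: Rle_refl.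
case Hx: (P x) => //. apply: Rplus_le_compat => //. exact: H.
Qed.

Lemma Rsum_ge0 (I : Type) (r : seq I) (P : pred I) (F : I -> R) :
  (forall i, P i -> Rle R0 (F i)) -> Rle R0 (\big[Rplus/R0]_(i <- r | P i) F i).
Proof.
move=> H. have := @Rsum_le I r P (fun _ => R0) F H. by rewrite Rsum_const Rmult_0_r.
Qed.

Lemma INR_sumS (I : Type) (r : seq I) (f : I -> nat) :
  \big[Rplus/R0]_(j <- r) INR (f j).+1 = INR (\sum_(j <- r) f j + size r)%nat.
Proof.
elim: r => [|x r IH]; rewrite ?big_nil ?big_cons; first by [].
rewrite IH -plus_INR. congr INR. by rewrite plusE /= addSn addnS addnA.
Qed.

Section Seqs.
Variable d : nat.
Hypothesis Hd : (0 < d)%nat.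

Fixpoint seqs n : seq (seq 'I_d) :=
  if n is n'.+1 then [seq rcons s j | s <- seqs n', j <- enum 'I_d] else [:: [::]].

Lemma mem_seqs n s : (s \in seqs n) = (size s == n).
Proof.
elim: n s => [|n IH] s /=.
- by rewrite mem_seq1 size_eq0.
- apply/allpairsP/idP => [[[s' j] [/= Hs' _ ->]]|].
  + by rewrite size_rcons eqSS -IH.
  + case/lastP: s => [//|s' x]; rewrite size_rcons eqSS => Hs.
    exists (s', x); split => //=; [by rewrite IH | by rewrite mem_enum].
Qed.

Lemma uniq_seqs n : uniq (seqs n).
Proof.
elim: n => [//|n IH] /=. apply: allpairs_uniq => //; first exact: enum_uniq.
by move=> [s j] [s' j'] _ _ /= /rcons_inj [-> ->].
Qed.

Definition cnt (s : seq 'I_d) : {ffun 'I_d -> nat} := [ffun j => count_mem j s].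

Lemma cnt_sum s : (\sum_j cnt s j)%nat = size s.
Proof.
elim: s => [|x s IH]. - by rewrite big1 // => j _; rewrite ffunE.
rewrite /= -IH (bigD1 x) //= [in RHS](bigD1 x) //= !ffunE /= eqxx add1n.
congr (_.+1 + _)%nat. apply: eq_bigr => j Hj. rewrite !ffunE /=. by rewrite eq_sym (negbTE Hj).
Qed.

Definition Kn (n : nat) : R := Rdiv (INR (d.-1)`!) (INR (n + d.-1)`!).
Definition qw (s : seq 'I_d) : R := Rmult (INR (\prod_(j < d) (cnt s j)`!)) (Kn (size s)).

Lemma qw_ge0 s : Rle R0 (qw s).
Proof.
apply: Rmult_le_pos; first exact: pos_INR.
apply: Rmult_le_pos; first exact: pos_INR. apply/Rlt_le/Rinv_0_lt_compat/lt_0_INR/ltP. exact: fact_gt0.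
Qed.

Lemma cnt_rcons s j i : cnt (rcons s j) i = (cnt s i + (j == i))%nat.
Proof. by rewrite !ffunE -cats1 count_cat /= addn0. Qed.

Lemma qw_rcons s j : qw (rcons s j) = Rmult (qw s) (Rdiv (INR (cnt s j).+1) (INR (size s + d))).
Proof.
rewrite /qw /Kn size_rcons.
have E1 : (\prod_(i < d) (cnt (rcons s j) i)`! = (cnt s j).+1 * \prod_(i < d) (cnt s i)`!)%nat.
{ rewrite (bigD1 j) //= [in RHS](bigD1 j) //= cnt_rcons eqxx addn1 factS -mulnA. congr (_ * (_ * _))%nat.
  apply: eq_bigr => i Hi. by rewrite cnt_rcons eq_sym (negbTE Hi) addn0. }
have E2 : ((size s).+1 + d.-1)`! = (size s + d) * (size s + d.-1)`!.
{ have -> : ((size s).+1 + d.-1 = (size s + d.-1).+1)%nat by rewrite addSn.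
  rewrite factS. congr (_ * _)%nat. by rewrite -addnS prednK. }
rewrite E1 E2 !mult_INR.
have H1 : INR (size s + d) <> R0.
{ apply: not_0_INR. apply/eqP. rewrite -lt0n. exact: leq_trans Hd (leq_addl _ _). }
have H2 : INR (size s + d.-1)`! <> R0.
{ apply: not_0_INR. apply/eqP. by rewrite -lt0n fact_gt0. }
field. split => //.
Qed.

Lemma qw_sum_rcons s : \big[Rplus/R0]_(j <- enum 'I_d) qw (rcons s j) = qw s.
Proof.
under eq_bigr => j _ do rewrite qw_rcons.
rewrite -Rsum_distr.
have H1 : INR (size s + d) <> R0.
{ apply: not_0_INR. apply/eqP. rewrite -lt0n. exact: leq_trans Hd (leq_addl _ _). }
suff -> : \big[Rplus/R0]_(j <- enum 'I_d) Rdiv (INR (cnt s j).+1) (INR (size s + d)) = R1.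
{ by rewrite Rmult_1_r. }
under eq_bigr => j _ do rewrite /Rdiv Rmult_comm.
rewrite -Rsum_distr.
suff -> : \big[Rplus/R0]_(j <- enum 'I_d) INR (cnt s j).+1 = INR (size s + d).
{ by rewrite Rinv_l. }
rewrite INR_sumS size_enum_ord. congr (INR (_ + _)). rewrite -cnt_sum.
first [by rewrite -enumT | by rewrite enumT | by rewrite big_enum | by rewrite /index_enum -enumT | by rewrite unlock].
Qed.

Lemma Rsum_distr_r (I : Type) (r : seq I) (F : I -> R) c :
  Rmult (\big[Rplus/R0]_(i <- r) F i) c = \big[Rplus/R0]_(i <- r) Rmult (F i) c.
Proof. rewrite Rmult_comm Rsum_distr. apply: eq_bigr => i _; by rewrite Rmult_comm. Qed.

Lemma prefix_sum m k (G : seq 'I_d -> R) :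
  \big[Rplus/R0]_(s <- seqs (m + k)) Rmult (qw s) (G (take m s)) =
  \big[Rplus/R0]_(t <- seqs m) Rmult (qw t) (G t).
Proof.
elim: k => [|k IH].
- rewrite addn0 big_seq [RHS]big_seq. apply: eq_bigr => s.
  rewrite mem_seqs => /eqP Hs. by rewrite -Hs take_size.
- rewrite addnS /= big_allpairs_dep -IH big_seq [RHS]big_seq.
  apply: eq_bigr => s. rewrite mem_seqs => /eqP Hs.
  have E : forall j, take m (rcons s j) = take m s.
  { move=> j. rewrite -cats1 takel_cat // Hs. exact: leq_addr. }
  under eq_bigr => j _ do rewrite E.
  by rewrite -Rsum_distr_r qw_sum_rcons.
Qed.

Lemma cnt_rev s : cnt (rev s) = cnt s.
Proof. apply/ffunP => j; by rewrite !ffunE count_rev. Qed.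

Lemma qw_rev s : qw (rev s) = qw s.
Proof. by rewrite /qw cnt_rev size_rev. Qed.

Lemma rev_sum n (G : seq 'I_d -> R) :
  \big[Rplus/R0]_(s <- seqs n) Rmult (qw s) (G (rev s)) =
  \big[Rplus/R0]_(s <- seqs n) Rmult (qw s) (G s).
Proof.
under eq_bigr => s _ do rewrite -qw_rev.
rewrite -(big_map rev predT (fun s => Rmult (qw s) (G s))).
apply: perm_big. apply: uniq_perm.
- rewrite (map_inj_uniq (can_inj (@revK _))). exact: uniq_seqs.
- exact: uniq_seqs.
- move=> s. apply/mapP/idP => [[t Ht ->]|Hs].
  + by rewrite mem_seqs size_rev -mem_seqs.
  + exists (rev s); last by rewrite revK. by rewrite mem_seqs size_rev -mem_seqs.
Qed.

Lemma qw_total n : \big[Rplus/R0]_(s <- seqs n) qw s = R1.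
Proof.
elim: n => [|n IH].
- rewrite /= big_cons big_nil /qw /Kn /= add0n.
  rewrite big1; last by move=> j _; rewrite ffunE.
  rewrite /Rdiv Rinv_r; first by rewrite Rmult_1_r Rplus_0_r.
  apply: not_0_INR. apply/eqP. by rewrite -lt0n fact_gt0.
- rewrite /= big_allpairs_dep -IH. apply: eq_bigr => s _. exact: qw_sum_rcons.
Qed.

Lemma block_sum N a m (G : {ffun 'I_d -> nat} -> R) : (a + m <= N)%nat ->
  \big[Rplus/R0]_(s <- seqs N) Rmult (qw s) (G (cnt (take m (drop a s)))) =
  \big[Rplus/R0]_(u <- seqs m) Rmult (qw u) (G (cnt u)).
Proof.
move=> HN.
have -> : N = ((m + a) + (N - (m + a)))%nat by rewrite subnKC // addnC.
under eq_bigr => s _ do rewrite take_drop.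
rewrite (prefix_sum (m + a) (N - (m + a)) (fun t => G (cnt (drop a t)))).
rewrite -(rev_sum (m + a) (fun t => G (cnt (drop a t)))).
rewrite -(prefix_sum m a (fun t => G (cnt t))).
rewrite big_seq [RHS]big_seq. apply: eq_bigr => t. rewrite mem_seqs => /eqP Ht.
by rewrite drop_rev Ht addnK cnt_rev.
Qed.

Lemma enum_ordE (F : 'I_d -> nat) : (\sum_(j <- enum 'I_d) F j = \sum_j F j)%nat.
Proof.
first [by rewrite -enumT | by rewrite enumT | by rewrite big_enum | by rewrite /index_enum -enumT | by rewrite unlock].
Qed.

Lemma count_sum (T : Type) (a : pred T) (l : seq T) : count a l = (\sum_(x <- l) a x)%nat.
Proof. elim: l => [|x l IH]; by rewrite ?big_nil ?big_cons //= IH. Qed.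

Definition vm (v : {ffun 'I_d -> nat}) (j : 'I_d) : {ffun 'I_d -> nat} :=
  [ffun i => if i == j then (v i).-1 else v i].

Lemma cnt_rcons_eq s j (v : {ffun 'I_d -> nat}) : (cnt (rcons s j) == v) = (0 < v j)%nat && (cnt s == vm v j).
Proof.
apply/eqP/andP => [H|[Hpos /eqP Hc]].
- rewrite -H; split; first by rewrite cnt_rcons eqxx addn1.
  apply/eqP/ffunP => i. rewrite /vm [in RHS]ffunE. case: (i =P j) => [->|Hne]; first by rewrite cnt_rcons eqxx addn1.
  rewrite cnt_rcons; case: (j =P i) => [E|_]; [by case: Hne|by rewrite addn0].
- apply/ffunP => i. rewrite cnt_rcons Hc ffunE.
  case: eqP => [->|Hne]; first by rewrite eqxx addn1 prednK.
  case: eqP => [E|]; [by case: Hne|by rewrite addn0].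
Qed.

Lemma count_step n (v : {ffun 'I_d -> nat}) :
  count (fun s => cnt s == v) (seqs n.+1) =
  (\sum_j (0 < v j)%nat * count (fun s => cnt s == vm v j) (seqs n))%nat.
Proof.
rewrite count_sum /= big_allpairs_dep.
under eq_bigr => s _ do under eq_bigr => j _ do rewrite cnt_rcons_eq -mulnb.
rewrite exchange_big -enum_ordE. apply: eq_bigr => j _.
by rewrite count_sum big_distrr.
Qed.

Lemma sum_vm (v : {ffun 'I_d -> nat}) j : (0 < v j)%nat -> (\sum_i vm v j i)%nat = (\sum_i v i).-1.
Proof.
move=> Hpos. rewrite (bigD1 j) //= [in RHS](bigD1 j) //= ffunE eqxx.
rewrite -[in RHS](prednK Hpos) addSn /=. congr (_ + _)%nat.
apply: eq_bigr => i Hi. by rewrite ffunE (negbTE Hi).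
Qed.

Lemma prod_vm (v : {ffun 'I_d -> nat}) j : (0 < v j)%nat ->
  (\prod_i (v i)`! = v j * \prod_i (vm v j i)`!)%nat.
Proof.
move=> Hpos. rewrite (bigD1 j) //= [in RHS](bigD1 j) //= ffunE eqxx.
rewrite -{1}(prednK Hpos) factS prednK // -mulnA. congr (_ * (_ * _))%nat.
apply: eq_bigr => i Hi. by rewrite ffunE (negbTE Hi).
Qed.

Lemma multinom n (v : {ffun 'I_d -> nat}) :
  (count (fun s => cnt s == v) (seqs n) * \prod_j (v j)`! = ((\sum_j v j) == n) * n`!)%nat.
Proof.
elim: n v => [|n IH] v.
- rewrite /= addn0 fact0 muln1.
  case Hs: ((\sum_j v j)%nat == 0%nat).
  + have Hv0 : forall j, v j = 0%nat.
    { move: Hs; rewrite sum_nat_eq0 => /forallP H j. exact/eqP/H. }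
    have -> : cnt [::] = v by apply/ffunP => j; rewrite ffunE Hv0.
    rewrite eqxx mul1n big1 // => j _. by rewrite Hv0.
  + case E: (cnt [::] == v) => //. move: Hs; rewrite -(eqP E).
    by rewrite big1 // => j _; rewrite ffunE.
- rewrite count_step big_distrl /=.
  have Hterm : forall j, ((0 < v j)%nat * count (fun s => cnt s == vm v j) (seqs n) * \prod_i (v i)`!
       = v j * (((\sum_i v i) == n.+1) * n`!))%nat.
  { move=> j. case: (posnP (v j)) => [H0|Hpos]; first by rewrite H0.
    rewrite mul1n (prod_vm Hpos) mulnCA IH (sum_vm Hpos).
    have Hsp : (0 < \sum_i v i)%nat.
    { apply: leq_trans Hpos _. rewrite (bigD1 j) //=. exact: leq_addr. }
    by rewrite -[in RHS](prednK Hsp) eqSS. }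
  under eq_bigr => j _ do rewrite Hterm.
  rewrite -big_distrl /=. case E: ((\sum_i v i)%nat == n.+1); last by rewrite !muln0.
  by rewrite (eqP E) /= !mul1n factS.
Qed.

Lemma partition_mon n (F : seq 'I_d -> R) :
  \big[Rplus/R0]_(s <- seqs n) F s =
  \big[Rplus/R0]_(a <- enum {: mon d n}) \big[Rplus/R0]_(s <- seqs n | cnt s == vecm a) F s.
Proof.
under [RHS]eq_bigr => a _ do rewrite big_mkcond.
rewrite exchange_big /=. rewrite big_seq [RHS]big_seq. apply: eq_bigr => s.
rewrite mem_seqs => /eqP Hs.
have [a0 Ha0] : exists a0 : mon d n, vecm a0 = cnt s by apply: mon_of_vec; rewrite cnt_sum.
rewrite (bigD1_seq a0) /=; [|by rewrite mem_enum|exact: enum_uniq].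
rewrite Ha0 eqxx big1 ?Rplus_0_r // => a Ha. case: eqP => // E.
by move: Ha; rewrite (vecm_inj (etrans Ha0 E)) eqxx.
Qed.

Definition cn n : R := Rmult (INR n`!) (Kn n).

Lemma unif_aux n (H : {ffun 'I_d -> nat} -> R) :
  \big[Rplus/R0]_(s <- seqs n) Rmult (qw s) (H (cnt s)) =
  Rmult (cn n) (\big[Rplus/R0]_(a <- enum {: mon d n}) H (vecm a)).
Proof.
rewrite partition_mon Rsum_distr. apply: eq_bigr => a _.
rewrite big_mkcond.
have E : forall s, s \in seqs n ->
  (if cnt s == vecm a then Rmult (qw s) (H (cnt s)) else R0) =
  (if cnt s == vecm a then Rmult (Rmult (INR (\prod_j (vecm a j)`!)) (Kn n)) (H (vecm a)) else R0).
{ move=> s; rewrite mem_seqs => /eqP Hs. case: eqP => // E0. by rewrite /qw Hs E0. }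
rewrite (eq_big_seq _ E) -big_mkcond Rsum_const.
have := multinom n (vecm a). rewrite vecm_sum eqxx mul1n => HM.
rewrite /cn -HM mult_INR. rewrite !Rmult_assoc. reflexivity.
Qed.

Lemma count_enum_T (T : finType) : count predT (enum T) = #|{: T}|.
Proof. by rewrite count_predT cardE. Qed.

Lemma cn_card n : Rmult (cn n) (INR #|{: mon d n}|) = R1.
Proof.
have := unif_aux n (fun _ => R1).
under eq_bigr => s _ do rewrite Rmult_1_r.
rewrite qw_total. have -> : \big[Rplus/R0]_(a <- enum {: mon d n}) R1 = INR #|{: mon d n}|.
{ rewrite Rsum_const Rmult_1_r. congr INR. first [by rewrite count_predT cardE | by rewrite -count_enum_T]. }
by move=> ->.
Qed.

Lemma unif_sum n (H : {ffun 'I_d -> nat} -> R) :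
  \big[Rplus/R0]_(s <- seqs n) Rmult (qw s) (H (cnt s)) =
  Rmult (Rinv (INR #|{: mon d n}|)) (\big[Rplus/R0]_(a <- enum {: mon d n}) H (vecm a)).
Proof.
rewrite unif_aux. congr Rmult.
have HC := cn_card n.
have Hnz : INR #|{: mon d n}| <> R0.
{ move=> H0. move: HC; rewrite H0 Rmult_0_r. move=> E0; by apply: R1_neq_R0. }
apply: (Rmult_eq_reg_r (INR #|{: mon d n}|)) => //. by rewrite HC Rinv_l.
Qed.

End Seqs.

Set Implicit Arguments.
Unset Strict Implicit.
Unset Printing Implicit Defensive.

Lemma big_enum_ord (T : Type) (idx : T) (op : Monoid.com_law idx) r (F : 'I_r -> T) :
  \big[op/idx]_(i <- enum 'I_r) F i = \big[op/idx]_(i < r) F i.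
Proof.
first [by rewrite -enumT | by rewrite enumT | by rewrite big_enum | by rewrite /index_enum -enumT | by rewrite unlock].
Qed.

Lemma count_blocks (T : eqType) (a : pred T) (l : seq nat) (s : seq T) :
  size s = sumn l ->
  count a s = (\sum_(0 <= k < size l) count a (take (nth 0 l k) (drop (sumn (take k l)) s)))%nat.
Proof.
elim: l s => [|n l IH] s Hs.
- move: Hs; rewrite /= => /eqP; rewrite size_eq0 => /eqP ->. by rewrite big_geq.
- rewrite /= big_nat_recl // /= drop0 -{1}(cat_take_drop n s) count_cat.
  congr (_ + _)%nat. rewrite (IH (drop n s)); last by rewrite size_drop Hs /= addKn.
  apply: eq_bigr => k _. by rewrite /= drop_drop addnC.
Qed.

Section Blocks.
Variables (d r : nat) (ns : 'I_r -> nat).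

Definition sh := [seq ns i | i <- enum 'I_r].
Definition blk (i : 'I_r) (s : seq 'I_d) := take (ns i) (drop (sumn (take i sh)) s).

Lemma sumn_sh : sumn sh = (\sum_(i < r) ns i)%nat.
Proof. by rewrite /sh sumnE big_map big_enum_ord. Qed.

Lemma nth_sh (i : 'I_r) : nth 0%nat sh i = ns i.
Proof.
rewrite /sh (nth_map i); last by rewrite size_enum_ord.
by rewrite nth_ord_enum.
Qed.

Lemma blk_bound (i : 'I_r) : (sumn (take i sh) + ns i <= \sum_(j < r) ns j)%nat.
Proof.
rewrite -sumn_sh -nth_sh.
have Hi : (i < size sh)%nat by rewrite size_map size_enum_ord.
rewrite -[X in (_ <= sumn X)%nat](cat_take_drop i.+1 sh) sumn_cat.
rewrite (take_nth 0%nat Hi) -cats1 sumn_cat /= addn0. exact: leq_addr.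
Qed.

Lemma size_blk (i : 'I_r) s : size s = (\sum_(j < r) ns j)%nat -> size (blk i s) = ns i.
Proof.
move=> Hs. rewrite /blk size_takel // size_drop Hs leq_subRL; first exact: blk_bound.
apply: leq_trans (blk_bound i). exact: leq_addr.
Qed.

Lemma cnt_blocks (s : seq 'I_d) j : size s = (\sum_(i < r) ns i)%nat ->
  cnt s j = (\sum_(i < r) cnt (blk i s) j)%nat.
Proof.
move=> Hs. rewrite ffunE (@count_blocks _ _ sh s); last by rewrite sumn_sh.
rewrite size_map size_enum_ord big_mkord. apply: eq_bigr => i _.
by rewrite ffunE nth_sh.
Qed.

Lemma foldr_vadd (I : Type) (l : seq I) (L : I -> {ffun 'I_d -> nat}) j :
  foldr (fun i acc => vadd (L i) acc) (vzero d) l j = (\sum_(i <- l) L i j)%nat.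
Proof.
elim: l => [|x l IH]; first by rewrite big_nil ffunE.
by rewrite big_cons /= ffunE IH.
Qed.

Lemma cnt_foldr (s : seq 'I_d) : size s = (\sum_(i < r) ns i)%nat ->
  foldr (fun i acc => vadd (cnt (blk i s)) acc) (vzero d) (enum 'I_r) = cnt s.
Proof.
move=> Hs. apply/ffunP => j. by rewrite foldr_vadd big_enum_ord cnt_blocks.
Qed.

End Blocks.

Set Implicit Arguments.
Unset Strict Implicit.
Unset Printing Implicit Defensive.

Lemma Rsum_big (I : Type) (l : seq I) (F : I -> R) :
  Rsum (List.map F l) = \big[Rplus/R0]_(i <- l) F i.
Proof. elim: l => [|x l IH]; by rewrite ?big_nil ?big_cons //= IH. Qed.

Lemma Rsum_pos (I : Type) (l : seq I) (w : I -> R) :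
  (forall i, Rlt R0 (w i)) -> l <> [::] -> Rlt R0 (\big[Rplus/R0]_(i <- l) w i).
Proof.
move=> Hw. elim: l => [//|x l IH] _. rewrite big_cons.
case: l IH => [|y l] IH; first by rewrite big_nil Rplus_0_r.
have := IH ltac:(done). have := Hw x. lra.
Qed.

Section Jensen.
Variable g : R -> R.
Hypothesis g_conc : concave g.

Lemma jensen (I : Type) (l : seq I) (w y : I -> R) :
  (forall i, Rlt R0 (w i)) -> l <> [::] ->
  Rle (\big[Rplus/R0]_(i <- l) Rmult (w i) (g (y i)))
      (Rmult (\big[Rplus/R0]_(i <- l) w i)
             (g (Rdiv (\big[Rplus/R0]_(i <- l) Rmult (w i) (y i)) (\big[Rplus/R0]_(i <- l) w i)))).
Proof.
move=> Hw. elim: l => [//|x l IH] _. rewrite !big_cons.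
case: l IH => [|z l] IH.
- rewrite !big_nil !Rplus_0_r. have Hx := Hw x.
  have -> : Rdiv (Rmult (w x) (y x)) (w x) = y x by field; lra.
  apply: Rle_refl.
- set W' := \big[Rplus/R0]_(i <- z :: l) w i.
  set S' := \big[Rplus/R0]_(i <- z :: l) Rmult (w i) (y i).
  set G' := \big[Rplus/R0]_(i <- z :: l) Rmult (w i) (g (y i)).
  have HW' : Rlt R0 W' by apply: Rsum_pos.
  have IH' := IH ltac:(done). fold W' S' G' in IH'.
  have Hx := Hw x.
  set t := Rdiv (w x) (Rplus (w x) W').
  have Ht0 : Rle R0 t by rewrite /t; apply: Rlt_le; apply: Rdiv_lt_0_compat; lra.
  have Ht1 : Rle t R1.
  { rewrite /t. apply: (Rmult_le_reg_r (Rplus (w x) W')); first lra.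
    rewrite /Rdiv Rmult_assoc Rinv_l; lra. }
  have Hc := g_conc (y x) (Rdiv S' W') Ht0 Ht1.
  have E1 : Rplus (Rmult t (y x)) (Rmult (Rminus R1 t) (Rdiv S' W')) =
            Rdiv (Rplus (Rmult (w x) (y x)) S') (Rplus (w x) W').
  { rewrite /t. field. lra. }
  rewrite E1 in Hc.
  have E2 : Rmult (Rplus (w x) W') (Rplus (Rmult t (g (y x))) (Rmult (Rminus R1 t) (g (Rdiv S' W')))) =
            Rplus (Rmult (w x) (g (y x))) (Rmult W' (g (Rdiv S' W'))).
  { rewrite /t. field. lra. }
  apply: Rle_trans (Rplus_le_compat_l _ _ _ IH') _.
  rewrite -E2. apply: Rmult_le_compat_l; [lra|exact Hc].
Qed.
End Jensen.

Set Implicit Arguments.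
Unset Strict Implicit.
Unset Printing Implicit Defensive.

Section Main.
Variables (K : fieldType) (d : nat) (d_pos : (0 < d)%nat)
  (F : forall n : nat, filtration (Bdeg K d n))
  (F_good : forall n : nat, good_filt (F n)) (B : nat).

Definition lamv (m : nat) (v : {ffun 'I_d -> nat}) : R :=
  epsilon (inhabits R0) (fun l => exists a : mon d m, vecm a = v /\ l = lam B (F m) a).

Lemma lamv_vecm m (a : mon d m) : lamv m (vecm a) = lam B (F m) a.
Proof.
rewrite /lamv.
have H : exists l, exists a' : mon d m, vecm a' = vecm a /\ l = lam B (F m) a' by exists (lam B (F m) a), a.
have [a' [Ha' ->]] := epsilon_spec (inhabits R0) _ H.
by rewrite (vecm_inj Ha').
Qed.

Lemma I_seq (g : R -> R) m : (m < B)%nat ->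
  I_n F g m = \big[Rplus/R0]_(s <- seqs d m) Rmult (qw s) (g (Rmult (Rinv (INR m)) (lamv m (cnt s)))).
Proof.
move=> HmB. rewrite /I_n (@I_formula K d B m HmB d_pos (F m) (F_good m) g) Rsum_big.
rewrite (unif_sum d_pos m (fun v => g (Rmult (Rinv (INR m)) (lamv m v)))) Rsum_distr.
apply: eq_bigr => a _. by rewrite lamv_vecm.
Qed.

Lemma key_ineq (f : nat -> R) (n0 : nat) (hquasi : quasi_filtered F f n0)
  (r : nat) (ns : 'I_r -> nat) (Hr : (0 < r)%nat) (Hn0 : forall i, (n0 <= ns i)%nat)
  (HB : (\sum_(i < r) ns i < B)%nat) (s : seq 'I_d) (Hs : size s = (\sum_(i < r) ns i)%nat) :
  Rle (\big[Rplus/R0]_(i <- enum 'I_r) Rminus (lamv (ns i) (cnt (blk ns i s))) (f (ns i)))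
      (lamv (\sum_(i < r) ns i)%nat (cnt s)).
Proof.
have Hex : forall i, exists a : mon d (ns i), vecm a = cnt (blk ns i s).
{ move=> i. apply: mon_of_vec. by rewrite cnt_sum size_blk. }
pose al i := proj1_sig (constructive_indefinite_description _ (Hex i)).
have Hal : forall i, vecm (al i) = cnt (blk ns i s).
{ move=> i. exact: (proj2_sig (constructive_indefinite_description _ (Hex i))). }
have Hx : forall i, exists x, x \in F (ns i) (lam B (F (ns i)) (al i)) /\ hasLead B x (vecm (al i)).
{ move=> i. exact: (@lam_attained K d B (ns i) (F (ns i)) (F_good (ns i)) (al i)). }
pose xs i := proj1_sig (constructive_indefinite_description _ (Hx i)).
have Hxs : forall i, xs i \in F (ns i) (lam B (F (ns i)) (al i)) /\ hasLead B (xs i) (vecm (al i)).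
{ move=> i. exact: (proj2_sig (constructive_indefinite_description _ (Hx i))). }
have HP := hquasi r ns (fun i => lam B (F (ns i)) (al i)) xs Hr Hn0 (fun i => proj1 (Hxs i)).
cbv zeta in HP.
have HBe : (\sum_(i <- enum 'I_r) ns i < B)%nat by rewrite big_enum_ord.
have Hlead : forall i, hasLead B (xs i) (cnt (blk ns i s)).
{ move=> i. rewrite -Hal. exact: (proj2 (Hxs i)). }
have [HP1 HP2] := lead_prodH HBe Hlead.
move: HP HP1 HP2.
set P := prodH _.
case: P => m x /= HP Hm HL.
rewrite big_enum_ord in Hm. subst m.
rewrite (cnt_foldr Hs) in HL.
have [be Hbe] : exists be : mon d (\sum_(i < r) ns i)%nat, vecm be = cnt s.
{ apply: mon_of_vec. by rewrite cnt_sum. }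
rewrite -Hbe in HL. rewrite -Hbe lamv_vecm.
apply: Rle_trans (@lam_ge K d B _ (F _) (F_good _) _ _ _ HP HL).
rewrite Rsum_big. apply: Req_le. apply: eq_bigr => i _. by rewrite -Hal lamv_vecm.
Qed.

End Main.

Lemma INR_sum (I : Type) (l : seq I) (F : I -> nat) :
  INR (\sum_(i <- l) F i)%nat = \big[Rplus/R0]_(i <- l) INR (F i).
Proof. elim: l => [|x l IH]; by rewrite ?big_nil ?big_cons //= plus_INR IH. Qed.

Lemma Rsum_split (I : Type) (l : seq I) (F G : I -> R) :
  \big[Rplus/R0]_(i <- l) Rplus (F i) (G i) =
  Rplus (\big[Rplus/R0]_(i <- l) F i) (\big[Rplus/R0]_(i <- l) G i).
Proof. elim: l => [|x l IH]; rewrite ?big_nil ?big_cons; [lra|rewrite IH; lra]. Qed.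

Theorem mainTheorem6
  (K : fieldType) (d : nat) (d_pos : (0 < d)%nat)
  (F : forall n : nat, filtration (Bdeg K d n))
  (F_good : forall n : nat, good_filt (F n))
  (f : nat -> R) (f_nonneg : forall n : nat, Rle R0 (f n))
  (n0 : nat) (hquasi : quasi_filtered F f n0)
  (c : R) (c_pos : Rlt R0 c)
  (g : R -> R) (g_conc : concave g) (g_incr : increasingR g) (g_lip : lipschitz c g) :
  forall (r : nat) (ns : 'I_r -> nat),
    (2 <= r)%nat ->
    (forall i, (maxn n0 1 <= ns i)%nat) ->
    let N := (\sum_(i < r) ns i)%nat in
    Rge (Rmult (INR N) (I_n F g N))
        (Rsum (List.map (fun i => Rminus (Rmult (INR (ns i)) (I_n F g (ns i)))
                                          (Rmult c (f (ns i))))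
                        (enum 'I_r))).
Proof.
move=> r ns Hr Hns N.
have Hn1 : forall i, (0 < ns i)%nat.
{ move=> i; move: (Hns i); rewrite geq_max => /andP [_ H]; exact H. }
have Hn0 : forall i, (n0 <= ns i)%nat.
{ move=> i; move: (Hns i); rewrite geq_max => /andP [H _]; exact H. }
have Hr0 : (0 < r)%nat by apply: leq_trans Hr.
have HiN : forall i, (ns i <= N)%nat by move=> i; rewrite /N (bigD1 i) //=; apply: leq_addr.
pose B := N.+1.
have HNB : (N < B)%nat by [].
have HiB : forall i, (ns i < B)%nat by move=> i; rewrite ltnS.
have Hw : forall i, Rlt R0 (INR (ns i)) by move=> i; apply: lt_0_INR; apply/ltP.
have Hne : enum 'I_r <> [::].
{ move=> E. have := size_enum_ord r. rewrite E /= => E2. by move: Hr; rewrite -E2. }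
have EI : forall i, I_n F g (ns i) =
  \big[Rplus/R0]_(s <- seqs d N) Rmult (qw s) (g (Rmult (Rinv (INR (ns i))) (lamv F B (ns i) (cnt (blk ns i s))))).
{ move=> i. rewrite (@I_seq K d d_pos F F_good B g (ns i) (HiB i)).
  rewrite /blk. symmetry. apply: (@block_sum d d_pos N (sumn (take i (sh ns))) (ns i) (fun v => g (Rmult (Rinv (INR (ns i))) (lamv F B (ns i) v)))). exact: blk_bound. }
rewrite (@I_seq K d d_pos F F_good B g N HNB) Rsum_big.
apply: Rle_ge.
pose y i s := lamv F B (ns i) (cnt (blk ns i s)).
have E1 : \big[Rplus/R0]_(i <- enum 'I_r)
     Rminus (Rmult (INR (ns i)) (I_n F g (ns i))) (Rmult c (f (ns i))) =
   \big[Rplus/R0]_(s <- seqs d N) Rmult (qw s)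
     (\big[Rplus/R0]_(i <- enum 'I_r) Rplus (Rmult (INR (ns i)) (g (Rmult (Rinv (INR (ns i))) (y i s))))
                                            (Ropp (Rmult c (f (ns i))))).
{ under eq_bigr => i _ do rewrite EI.
  under [RHS]eq_bigr => s _ do rewrite Rsum_distr.
  rewrite exchange_big /=. apply: eq_bigr => i _.
  under [RHS]eq_bigr => s _ do rewrite Rmult_plus_distr_l.
  rewrite Rsum_split -Rsum_distr_r (qw_total d_pos). rewrite (@Rsum_distr _ (seqs d N) (fun _ => true)). rewrite /Rminus Rmult_1_l. congr Rplus.
  apply: eq_bigr => s _. rewrite /y. ring. }
rewrite E1 Rsum_distr. rewrite big_seq [X in Rle _ X]big_seq.
apply: Rsum_le => s Hs.
have Hre : forall a b c0, Rmult a (Rmult b c0) = Rmult b (Rmult a c0) by move=> *; ring.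
rewrite [X in Rle _ X]Hre. apply: Rmult_le_compat_l; first exact: qw_ge0.
move: Hs; rewrite mem_seqs => /eqP Hs.
have Hlip : forall i, Rle (Rplus (Rmult (INR (ns i)) (g (Rmult (Rinv (INR (ns i))) (y i s)))) (Ropp (Rmult c (f (ns i)))))
   (Rmult (INR (ns i)) (g (Rdiv (Rminus (y i s) (f (ns i))) (INR (ns i))))).
{ move=> i. have Hwi := Hw i. have Hfi := f_nonneg (ns i).
  have L := g_lip (Rmult (Rinv (INR (ns i))) (y i s)) (Rdiv (Rminus (y i s) (f (ns i))) (INR (ns i))).
  have E : Rminus (Rmult (Rinv (INR (ns i))) (y i s)) (Rdiv (Rminus (y i s) (f (ns i))) (INR (ns i))) =
            Rdiv (f (ns i)) (INR (ns i)) by field; lra.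
  rewrite E in L.
  rewrite (Rabs_pos_eq (Rdiv (f (ns i)) (INR (ns i)))) in L; last by rewrite /Rdiv; apply: Rmult_le_pos; [exact: f_nonneg| apply: Rlt_le; apply: Rinv_0_lt_compat].
  have L2 := Rle_trans _ _ _ (Rle_abs _) L.
  have L3 : Rle (Rmult (INR (ns i)) (Rminus (g (Rmult (Rinv (INR (ns i))) (y i s))) (g (Rdiv (Rminus (y i s) (f (ns i))) (INR (ns i))))))
                (Rmult c (f (ns i))).
  { have -> : Rmult c (f (ns i)) = Rmult (INR (ns i)) (Rmult c (Rdiv (f (ns i)) (INR (ns i)))) by field; lra.
    apply: Rmult_le_compat_l; lra. }
  lra. }
apply: Rle_trans (@Rsum_le _ (enum 'I_r) (fun _ => true) _ _ (fun i _ => Hlip i)) _.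
apply: Rle_trans (jensen g_conc (fun i => Rdiv (Rminus (y i s) (f (ns i))) (INR (ns i))) Hw Hne) _.
have EW : \big[Rplus/R0]_(i <- enum 'I_r) INR (ns i) = INR N by rewrite -INR_sum big_enum_ord.
have ES : \big[Rplus/R0]_(i <- enum 'I_r) Rmult (INR (ns i)) (Rdiv (Rminus (y i s) (f (ns i))) (INR (ns i))) =
          \big[Rplus/R0]_(i <- enum 'I_r) Rminus (y i s) (f (ns i)).
{ apply: eq_bigr => i _. have := Hw i. move=> Hwi. field. lra. }
rewrite EW ES. apply: Rmult_le_compat_l; first exact: pos_INR.
apply: g_incr. rewrite /Rdiv Rmult_comm. apply: Rmult_le_compat_l.
{ apply: Rlt_le; apply: Rinv_0_lt_compat. rewrite -EW. exact: Rsum_pos. }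
exact: (@key_ineq K d F F_good B f n0 hquasi r ns Hr0 Hn0 HNB s Hs).
Qed.
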